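(* Consider the critical discount factor \[\delta^*(p,c,\beta)=\frac{p-2c}{p-\beta p^2+p^2}\] on the admissible region of parameters $p\in(0,1]$, constant cost $c\ge0$ (not depending on $p$), $\beta<1$, satisfying $c<\frac12p+\frac12(\beta-1)p^2$. Then: (i) $\delta^*$ is strictly decreasing in $c$; (ii) $\delta^*$ is strictly increasing in $\beta$; (iii) $\delta^*$ is not monotone in $p$: the partial derivative $\partial\delta^*/\partial p$ is positive at some admissible parameter points and negative at others.
   Context: $\delta^*$ is the threshold discount factor above which two symmetric players in an infinitely repeated Prisoners' Dilemma of ranking-manipulation attacks sustain cooperation under the grim trigger strategy; $p$ is the attack success probability, $c$ the per-period attack cost, $\beta$ the market degradation factor under mutual successful attacks. The inequality $c<\frac12p+\frac12(\beta-1)p^2$ is the standing assumption guaranteeing the Prisoners' Dilemma payoff ordering. *)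

(* Defs.v *)
From Stdlib Require Import Reals.
Open Scope R_scope.

Definition delta_star (p c beta : R) : R :=
  (p - 2 * c) / (p - beta * p ^ 2 + p ^ 2).

Definition admissible (p c beta : R) : Prop :=
  0 < p <= 1 /\ 0 <= c /\ beta < 1 /\ c < / 2 * p + / 2 * (beta - 1) * p ^ 2.

(* Main.v *)
Require Import Defs.
From Stdlib Require Import Reals Lra Psatz.
From Coquelicot Require Import Coquelicot.
Open Scope R_scope.

Lemma der_ex (p c b d : R) : p - b * p ^ 2 + p ^ 2 <> 0 ->
  d = ((p - b * p ^ 2 + p ^ 2) - (p - 2*c) * (1 - 2*b*p + 2*p)) / (p - b * p ^ 2 + p ^ 2)^2 ->
  derivable_pt_lim (fun q => delta_star q c b) p d.
Proof.
  intros H Hd. apply is_derive_Reals. unfold delta_star.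
  auto_derive. exact H. rewrite Hd. field. exact H.
Qed.

Theorem theorem2 :
  (* (i) strictly decreasing in c *)
  (forall p beta c1 c2,
      admissible p c1 beta -> admissible p c2 beta -> c1 < c2 ->
      delta_star p c2 beta < delta_star p c1 beta) /\
  (* (ii) strictly increasing in beta *)
  (forall p c b1 b2,
      admissible p c b1 -> admissible p c b2 -> b1 < b2 ->
      delta_star p c b1 < delta_star p c b2) /\
  (* (iii) not monotone in p: the partial derivative in p takes both signs *)
  (exists p c beta d, admissible p c beta /\
      derivable_pt_lim (fun q => delta_star q c beta) p d /\ 0 < d) /\
  (exists p c beta d, admissible p c beta /\
      derivable_pt_lim (fun q => delta_star q c beta) p d /\ d < 0).
Proof.
  split; [|split; [|split]].
  - intros p b c1 c2 [[Hp Hp1] [Hc1 [Hb Hc]]] _ H12. unfold delta_star.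
    assert (HD : 0 < p - b * p ^ 2 + p ^ 2) by nra.
    unfold Rdiv. apply Rmult_lt_compat_r. apply Rinv_0_lt_compat; lra. lra.
  - intros p c b1 b2 [[Hp Hp1] [Hc [Hb Hcc]]] [_ [_ [Hb2 Hc2]]] H12. unfold delta_star.
    assert (HD1 : 0 < p - b1 * p ^ 2 + p ^ 2) by nra.
    assert (HD2 : 0 < p - b2 * p ^ 2 + p ^ 2) by nra.
    assert (HN : 0 < p - 2 * c) by nra.
    unfold Rdiv; apply Rmult_lt_compat_l; [lra|]. assert (0 < p^2) by nra. apply Rinv_lt_contravar; [apply Rmult_lt_0_compat; lra| nra].
  - exists 1, (1/5), (1/2), (2/15). split; [unfold admissible; simpl; repeat split; lra|split].
    apply der_ex. lra. field. lra.
  - exists (1/2), 0, 0, (-(1/4)/((3/4)^2)). split; [unfold admissible; simpl; repeat split; lra|split].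
    apply der_ex. lra. field. unfold Rdiv. assert (0 < / ((3/4)^2)) by (apply Rinv_0_lt_compat; nra). nra.
Qed.
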